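(* In the setting below with $P=\mathfrak A$ and the absolute error criterion, assume $\lambda\in\ell_{\tau_0}$ for some $\tau_0\in(0,\infty)$. Then: (i) if $\lambda_1<1$, $\{S_d\}$ is strongly polynomially tractable, independently of the choice of the sets $I_d$; (ii) if $\lambda_1\ge1$ and there exist $\tau\ge\tau_0$ and $d_0\in\mathbb N$ such that $$\frac{\ln(a_d!)}{d}\ge\ln\big(\|\lambda\|_{\ell_\tau}^\tau\big)\quad\text{for all }d\ge d_0,$$ then $\{S_d\}$ is strongly polynomially tractable.
   Context: Setting: $S_1:H_1\to G_1$ is a compact linear operator between real Hilbert spaces ($H_1$ infinite-dimensional separable); $\lambda=(\lambda_m)_{m\in\mathbb N}$, $\lambda_1\ge\lambda_2\ge\dots\ge0$, are the eigenvalues of $S_1^\dagger S_1$. $S_d=S_1^{\otimes d}:H_1^{\otimes d}\to G_1^{\otimes d}$. For each $d$ fix $\emptyset\ne I_d=\{i_1<\dots<i_{a_d}\}\subset\{1,\dots,d\}$ ($I_1=\{1\}$), put $a_d=\#I_d$, $b_d=d-a_d$, and fix one type $P\in\{\mathfrak S,\mathfrak A\}$ for all $d$; the problem $\{S_d\}$ is the family of restrictions of $S_d$ to the $I_d$-symmetric subspace (if $P=\mathfrak S$) or $I_d$-antisymmetric subspace (if $P=\mathfrak A$) of $H_1^{\otimes d}$, i.e. the range of $\frac1{a_d!}\sum_{\pi}(\pm1)U_\pi$, the sum over permutations $\pi$ of $\{1,\dots,d\}$ fixing all points outside $I_d$, $U_\pi(f_1\otimes\cdots\otimes f_d)=f_{\pi(1)}\otimes\cdots\otimes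 f_{\pi(d)}$, sign $(-1)^{|\pi|}$ used for $\mathfrak A$. Let $\nabla_d=\{k\in\mathbb N^d:k_{i_1}\le\dots\le k_{i_{a_d}}\}$ for $P=\mathfrak S$ and with strict inequalities for $P=\mathfrak A$; $\lambda_{d,k}=\prod_{l=1}^d\lambda_{k_l}$; $\psi:\mathbb N\to\nabla_d$ a bijection with $\lambda_{d,\psi(1)}\ge\lambda_{d,\psi(2)}\ge\cdots$. These are exactly the eigenvalues of $S_d^\dagger S_d$ on the subspace, and the information complexity (absolute error) is $n(\epsilon,d)=\#\{k\in\nabla_d:\lambda_{d,k}>\epsilon^2\}$, the initial error $\epsilon^{\rm init}_d=\sqrt{\lambda_{d,\psi(1)}}$ (equal to $\lambda_1^{d/2}$ if $P=\mathfrak S$, and $\sqrt{\lambda_1^{b_d}\lambda_1\lambda_2\cdots\lambda_{a_d}}$ if $P=\mathfrak A$). Polynomially tractable: $\exists C,p>0,q\ge0$ with $n(\epsilon,d)\le C\epsilon^{-p}d^q$ for all $d\in\mathbb N,\epsilon\in(0,1]$; strongly polynomially tractable: this with $q=0$. Standing assumptions: $\lambda_2>0$ and $\epsilon_d^{\rm init}>0$ for all $d$. $\ell_\tau$: sequences with $\|\lambda\|_{\ell_\tau}^\tau=\sum_m\lambda_m^\tau<\infty$. *)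

(* Defs.v *)
From Stdlib Require Import Reals Lra Lia List Arith.
Open Scope R_scope.

(* Conventions (0-based indexing):
   - lam : nat -> R, with lam m = lambda_{m+1}  (so lam 0 = lambda_1).
   - a multi-index k in N^d is a list of naturals of length d, entry k_l
     stored as k_l - 1 (0-based), position l in {0,...,d-1} stands for l+1.
   - the index set I_d subset {1..d} is given by a boolean predicate
     I d : nat -> bool on positions 0..d-1. *)

Definition a_card (I : nat -> nat -> bool) (d : nat) : nat :=
  length (filter (I d) (seq 0 d)).

Definition admissible_I (I : nat -> nat -> bool) : Prop :=
  (forall d, (1 <= d)%nat -> (1 <= a_card I d)%nat) /\ I 1%nat 0%nat = true.

Definition in_nabla_A (I : nat -> nat -> bool) (d : nat) (k : list nat) : Prop :=
  length k = d /\
  forall i j, (i < j)%nat -> (j < d)%nat -> I d i = true -> I d j = true ->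
    (nth i k 0 < nth j k 0)%nat.

Definition lam_dk (lam : nat -> R) (k : list nat) : R :=
  fold_right Rmult 1 (map lam k).

(* "n(eps,d) <= x": the set {k in nabla_d : lambda_{d,k} > eps^2} has at most
   x elements (every finite duplicate-free list of such k has length <= x). *)
Definition info_compl_le (lam : nat -> R) (I : nat -> nat -> bool)
    (eps : R) (d : nat) (x : R) : Prop :=
  forall l : list (list nat), NoDup l ->
    (forall k, In k l -> in_nabla_A I d k /\ lam_dk lam k > eps ^ 2) ->
    INR (length l) <= x.

Definition strongly_poly_tractable (lam : nat -> R) (I : nat -> nat -> bool) : Prop :=
  exists C p : R, 0 < C /\ 0 < p /\
    forall (d : nat) (eps : R), (1 <= d)%nat -> 0 < eps -> eps <= 1 ->
      info_compl_le lam I eps d (C * Rpower eps (- p)).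

Definition rpow (x t : R) : R := if Req_EM_T x 0 then 0 else Rpower x t.

Definition ltau_pow (lam : nat -> R) (tau L : R) : Prop :=
  infinite_sum (fun m => rpow (lam m) tau) L.

Definition in_ltau (lam : nat -> R) (tau : R) : Prop :=
  exists L, ltau_pow lam tau L.

Definition init_err_A (lam : nat -> R) (I : nat -> nat -> bool) (d : nat) : R :=
  sqrt (lam 0%nat ^ (d - a_card I d) *
        fold_right Rmult 1 (map lam (seq 0 (a_card I d)))).

(* Main.v *)
Require Import Defs.
From Stdlib Require Import Reals List Arith Lra Lia.
Open Scope R_scope.

Definition fk (mu : nat -> R) (k : list nat) : R := fold_right Rmult 1 (map mu k).
Definition lsum (mu : nat -> R) (l : list (list nat)) : R := fold_right Rplus 0 (map (fk mu) l).
Definition ssum (mu : nat -> R) (c n : nat) : R := fold_right Rplus 0 (map mu (seq c n)).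

Lemma lsum_filter mu p l : lsum mu l = lsum mu (filter p l) + lsum mu (filter (fun k => negb (p k)) l).
Proof.
  unfold lsum; induction l as [|a l IH]; simpl. lra.
  destruct (p a); simpl; rewrite IH; lra.
Qed.

Definition hb (x : nat) (k : list nat) : bool :=
  match k with y :: _ => Nat.eqb y x | nil => false end.

Lemma hb_eq x k : hb x k = true -> k = x :: tl k.
Proof. destruct k as [|y k]; simpl; intro H; [discriminate|]. apply Nat.eqb_eq in H; subst; auto. Qed.

Lemma lsum_head mu x l : lsum mu (filter (hb x) l) = mu x * lsum mu (map (@tl nat) (filter (hb x) l)).
Proof.
  unfold lsum; induction l as [|k l IH]; simpl. ring.
  destruct k as [|y k']; simpl. exact IH.
  destruct (Nat.eqb_spec y x); simpl.
  - subst. rewrite IH. unfold fk; simpl. ring.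
  - exact IH.
Qed.

Lemma nodup_tl x l : NoDup l -> (forall k, In k l -> hb x k = true) -> NoDup (map (@tl nat) l).
Proof.
  induction l as [|a l IH]; simpl; intros Hnd Hh. constructor.
  inversion Hnd; subst. constructor.
  - intro Hin. apply in_map_iff in Hin. destruct Hin as [k [Hk Hkl]].
    apply H1. assert (a = k) as ->; [|exact Hkl].
    rewrite (hb_eq x a), (hb_eq x k); [ rewrite Hk; reflexivity | | ]; auto.
  - apply IH; auto.
Qed.

Lemma split_heads mu (P : nat -> list nat -> Prop) (B : nat -> R) :
  (forall x, 0 <= mu x) ->
  (forall x l', NoDup l' -> (forall k', In k' l' -> P x k') -> lsum mu l' <= B x) ->
  forall xs l, NoDup l -> (forall k, In k l -> exists x k', k = x :: k' /\ In x xs /\ P x k') ->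
  lsum mu l <= fold_right Rplus 0 (map (fun x => mu x * B x) xs).
Proof.
  intros Hmu HB. induction xs as [|x xs IH]; intros l Hnd Hl; simpl.
  - destruct l as [|k l]. unfold lsum; simpl; lra.
    destruct (Hl k (or_introl eq_refl)) as [? [? [_ [[] _]]]].
  - rewrite (lsum_filter mu (hb x) l). apply Rplus_le_compat.
    + rewrite lsum_head. apply Rmult_le_compat_l; [auto|]. apply HB.
      * apply (nodup_tl x). apply NoDup_filter; auto.
        intros k Hk; apply filter_In in Hk; tauto.
      * intros k' Hk'. apply in_map_iff in Hk'. destruct Hk' as [k [Hk Hkin]].
        apply filter_In in Hkin. destruct Hkin as [Hkl Hhb].
        destruct (Hl k Hkl) as [y [k'' [E [_ HP]]]]. subst k. simpl in Hhb, Hk.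
        apply Nat.eqb_eq in Hhb. subst. exact HP.
    + apply IH. apply NoDup_filter; auto. intros k Hk. apply filter_In in Hk.
      destruct Hk as [Hkl Hn]. destruct (Hl k Hkl) as [y [k'' [E [Hin HP]]]]. subst k.
      simpl in Hn. destruct Hin as [E|Hin].
      * subst. rewrite Nat.eqb_refl in Hn. discriminate.
      * eauto.
Qed.

Fixpoint ok (N : nat) (m : list bool) (c : nat) (k : list nat) : Prop :=
  match m, k with
  | nil, nil => True
  | b :: m', x :: k' => (x < N)%nat /\ (if b then (c <= x)%nat /\ ok N m' (S x) k' else ok N m' c k')
  | _, _ => False
  end.

Fixpoint nt (m : list bool) : nat := match m with nil => O | b :: m' => if b then S (nt m') else nt m' end.
Fixpoint nf (m : list bool) : nat := match m with nil => O | b :: m' => if b then nf m' else S (nf m') end.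

Definition G mu N c := ssum mu c (N - c).
Definition Q mu N K m c := K ^ nf m * G mu N c ^ nt m / INR (fact (nt m)).

Lemma ssum_nonneg mu c n : (forall x, 0 <= mu x) -> 0 <= ssum mu c n.
Proof.
  intro H. revert c; induction n; intro c; unfold ssum in *; simpl. lra.
  specialize (IHn (S c)). specialize (H c). lra.
Qed.

Lemma bern s u n : 0 <= s -> 0 <= u -> s^(S n) + INR (S n) * u * s^n <= (s+u)^(S n).
Proof.
  intros Hs Hu. induction n.
  - simpl. lra.
  - set (t := s ^ n) in *.
    change (s ^ S (S n)) with (s * (s * t)). change (s ^ S n) with (s * t) in *.
    change ((s+u)^(S (S n))) with ((s+u)*(s+u)^(S n)).
    assert (0 <= t) by (apply pow_le; auto).
    assert (0 <= INR (S n)) by apply pos_INR.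
    rewrite (S_INR (S n)).
    apply Rle_trans with ((s+u)*(s*t+INR(S n)*u*t)).
    + assert (0 <= INR (S n) * (u*u) * t) by (repeat apply Rmult_le_pos; nra). nra.
    + apply Rmult_le_compat_l; lra.
Qed.

Lemma tele mu N a : (forall x, 0 <= mu x) -> forall n c, (n = N - c)%nat ->
  fold_right Rplus 0 (map (fun x => mu x * G mu N (S x) ^ a) (seq c n)) <= G mu N c ^ (S a) / INR (S a).
Proof.
  intros Hmu. induction n as [|n IH]; intros c E.
  - unfold G, ssum. rewrite <- E. simpl. unfold Rdiv; rewrite !Rmult_0_l; lra.
  - change (seq c (S n)) with (c :: seq (S c) n). cbn [map fold_right].
    set (s := G mu N (S c)).
    assert (Hs : 0 <= s) by (apply ssum_nonneg; auto).
    assert (HGc : G mu N c = mu c + s).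
    { unfold s, G, ssum. replace (N - c)%nat with (S (N - S c)) by lia. reflexivity. }
    rewrite HGc. pose proof (bern s (mu c) a Hs (Hmu c)).
    assert (INR (S a) > 0) by (apply lt_0_INR; lia).
    specialize (IH (S c) ltac:(lia)).
    apply Rle_trans with (mu c * s^a + s^(S a)/INR(S a)). fold s in IH. lra.
    rewrite (Rplus_comm (mu c) s).
    apply Rmult_le_reg_r with (INR (S a)); auto.
    unfold Rdiv. rewrite Rmult_plus_distr_r, !Rmult_assoc, Rinv_l; [|lra]. nra.
Qed.

Lemma nil_only mu l : NoDup l -> (forall k, In k l -> k = nil) -> lsum mu l <= 1.
Proof.
  destruct l as [|k l]; intros Hnd H. unfold lsum; simpl; lra.
  destruct l as [|k' l].
  - unfold lsum; simpl. rewrite (H k) by (simpl; auto). unfold fk; simpl; lra.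
  - exfalso. inversion Hnd; subst. apply H2. rewrite (H k), (H k'); simpl; auto.
Qed.

Lemma sum_scal (f : nat -> R) r xs :
  fold_right Rplus 0 (map (fun x => f x * r) xs) = fold_right Rplus 0 (map f xs) * r.
Proof. induction xs; simpl. ring. rewrite IHxs. ring. Qed.

Lemma Q_nonneg mu N K m c : (forall x, 0 <= mu x) -> 0 <= K -> 0 <= Q mu N K m c.
Proof.
  intros. unfold Q, Rdiv. apply Rmult_le_pos. apply Rmult_le_pos; apply pow_le; auto.
  apply ssum_nonneg; auto. left; apply Rinv_0_lt_compat, INR_fact_lt_0.
Qed.

Lemma core mu N K : (forall x, 0 <= mu x) -> 0 <= K -> ssum mu 0 N <= K ->
  forall m c l, NoDup l -> (forall k, In k l -> ok N m c k) -> lsum mu l <= Q mu N K m c.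
Proof.
  intros Hmu HK HN. induction m as [|b m IH]; intros c l Hnd Hl.
  - unfold Q; simpl. replace (1 * 1 / 1) with 1 by field.
    apply nil_only; auto. intros k Hk. specialize (Hl k Hk). destruct k; simpl in Hl; tauto.
  - destruct b.
    + apply Rle_trans with (fold_right Rplus 0 (map (fun x => mu x * Q mu N K m (S x)) (seq c (N - c)))).
      * apply (split_heads mu (fun x k' => ok N m (S x) k') (fun x => Q mu N K m (S x))); auto.
        intros k Hk. specialize (Hl k Hk). destruct k as [|x k']; simpl in Hl; [tauto|].
        exists x, k'. split; auto. split. apply in_seq. lia. tauto.
      * unfold Q. simpl nf; simpl nt.
        rewrite (map_ext (fun x => mu x * (K ^ nf m * G mu N (S x) ^ nt m / INR (fact (nt m))))
                  (fun x => (mu x * G mu N (S x) ^ nt m) * (K ^ nf m / INR (fact (nt m)))))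
          by (intros; field; apply INR_fact_neq_0).
        rewrite sum_scal.
        apply Rle_trans with (G mu N c ^ (S (nt m)) / INR (S (nt m)) * (K ^ nf m / INR (fact (nt m)))).
        -- apply Rmult_le_compat_r. unfold Rdiv. apply Rmult_le_pos. apply pow_le; auto.
           left; apply Rinv_0_lt_compat, INR_fact_lt_0.
           apply tele; auto.
        -- right. rewrite fact_simpl, mult_INR. field.
           split. apply INR_fact_neq_0. apply not_0_INR. lia.
    + apply Rle_trans with (fold_right Rplus 0 (map (fun x => mu x * Q mu N K m c) (seq 0 N))).
      * apply (split_heads mu (fun x k' => ok N m c k') (fun x => Q mu N K m c)); auto.
        intros k Hk. specialize (Hl k Hk). destruct k as [|x k']; simpl in Hl; [tauto|].
        exists x, k'. split; auto. split. apply in_seq. lia. tauto.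
      * rewrite (sum_scal mu (Q mu N K m c)).
        apply Rle_trans with (K * Q mu N K m c).
        -- apply Rmult_le_compat_r; [apply Q_nonneg; auto| exact HN].
        -- right. unfold Q; simpl. field. apply INR_fact_neq_0.
Qed.

Lemma to_ok N : forall m k c, length k = length m ->
  (forall i j, (i < j)%nat -> (j < length m)%nat -> nth i m false = true -> nth j m false = true ->
     (nth i k 0 < nth j k 0)%nat) ->
  (forall i, (i < length m)%nat -> nth i m false = true -> (c <= nth i k 0)%nat) ->
  (forall x, In x k -> (x < N)%nat) -> ok N m c k.
Proof.
  induction m as [|b m IH]; intros k c Hlen Hinc Hc HN; destruct k as [|x k]; simpl in *;
    try discriminate; auto.
  split. apply HN; auto.
  destruct b.
  - split. apply (Hc 0%nat); [lia | reflexivity].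
    apply IH; [lia | | | ].
    + intros i j Hij Hj Hi Hj'. apply (Hinc (S i) (S j)); simpl; auto; lia.
    + intros i Hi Hit. apply (Hinc 0%nat (S i)); simpl; auto; lia.
    + intros; apply HN; auto.
  - apply IH; [lia | | | ].
    + intros i j Hij Hj Hi Hj'. apply (Hinc (S i) (S j)); simpl; auto; lia.
    + intros i Hi Hit. apply (Hc (S i)); simpl; auto; lia.
    + intros; apply HN; auto.
Qed.

Lemma nth_mask (f : nat -> bool) d i : (i < d)%nat -> nth i (map f (seq 0 d)) false = f i.
Proof.
  intros. rewrite nth_indep with (d' := f 0%nat) by (rewrite length_map, length_seq; auto).
  rewrite map_nth, seq_nth; auto.
Qed.

Lemma nt_map (f : nat -> bool) s : nt (map f s) = length (filter f s).
Proof. induction s; simpl; auto. destruct (f a); simpl; auto. Qed.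

Lemma nf_nt m : (nf m + nt m = length m)%nat.
Proof. induction m as [|b m IH]; simpl; auto. destruct b; simpl; lia. Qed.

Lemma prod_nonneg (f : nat -> R) k : (forall x, 0 <= f x) -> 0 <= fold_right Rmult 1 (map f k).
Proof. intros H; induction k; simpl. lra. apply Rmult_le_pos; auto. Qed.

Lemma fk_rpow (lam : nat -> R) (tau : R) (k : list nat) : (forall x, 0 <= lam x) -> 0 < fold_right Rmult 1 (map lam k) ->
  fold_right Rmult 1 (map (fun x => rpow (lam x) tau) k) = Rpower (fold_right Rmult 1 (map lam k)) tau.
Proof.
  intros H0. induction k as [|x k IH]; intros Hp; simpl in *.
  - unfold Rpower; rewrite ln_1, Rmult_0_r, exp_0; auto.
  - set (P := fold_right Rmult 1 (map lam k)) in *.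
    assert (0 <= P) by (apply prod_nonneg; auto).
    assert (lam x <> 0) by (intro E; rewrite E in Hp; lra).
    assert (P <> 0) by (intro E; rewrite E in Hp; lra).
    specialize (H0 x).
    rewrite IH by lra. unfold rpow; destruct (Req_EM_T (lam x) 0); [contradiction|].
    rewrite Rpower_mult_distr; auto; lra.
Qed.

Lemma count_lb mu e l : (forall k, In k l -> e <= fk mu k) -> INR (length l) * e <= lsum mu l.
Proof.
  induction l as [|a l IH]; intros H. unfold lsum; simpl. lra.
  change (length (a :: l)) with (S (length l)). rewrite S_INR. unfold lsum in *. cbn [map fold_right]. specialize (IH (fun k Hk => H k (or_intror Hk))). specialize (H a (or_introl eq_refl)).
  lra.
Qed.

Lemma max_in s x : In x s -> (x <= fold_right max 0 s)%nat.
Proof. induction s; simpl; [intros []|intros [E|H]; [subst; lia | specialize (IHs H); lia]]. Qed.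

Lemma rpow_nonneg x t : 0 <= rpow x t.
Proof. unfold rpow; destruct (Req_EM_T x 0); [lra|]. left; unfold Rpower; apply exp_pos. Qed.

Lemma spt_generic lam I tau K C : (forall x, 0 <= lam x) -> 0 < tau -> 0 < C -> 0 <= K ->
  (forall N, ssum (fun x => rpow (lam x) tau) 0 N <= K) ->
  (forall d, (1 <= d)%nat -> K ^ (d - a_card I d) * K ^ (a_card I d) / INR (fact (a_card I d)) <= C) ->
  strongly_poly_tractable lam I.
Proof.
  intros Hlam Htau HC HK HN HD. exists C, (2 * tau). split; auto. split; [lra|].
  intros d eps Hd He He1 l Hnd Hl.
  set (mu := fun x => rpow (lam x) tau) in *.
  assert (Hmu : forall x, 0 <= mu x) by (intros; apply rpow_nonneg).
  set (N := S (fold_right max 0%nat (map (fun k => fold_right max 0%nat k) l))).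
  set (m := map (I d) (seq 0 d)).
  assert (Hok : forall k, In k l -> ok N m 0 k).
  { intros k Hk. destruct (Hl k Hk) as [[Hlen Hinc] _]. apply to_ok.
    - rewrite Hlen; unfold m; rewrite length_map, length_seq; auto.
    - intros i j Hij Hj Hi Hj'. unfold m in *; rewrite length_map, length_seq in Hj.
      rewrite nth_mask in Hi, Hj' by lia. apply Hinc; auto.
    - intros; lia.
    - intros x Hx. unfold N. apply Nat.lt_succ_r.
      apply Nat.le_trans with (fold_right max 0%nat k). apply max_in; auto.
      apply max_in. apply in_map_iff. exists k; auto. }
  assert (Hb : lsum mu l <= Q mu N K m 0) by (apply core; auto).
  assert (Hnt : nt m = a_card I d) by (unfold m, a_card; apply nt_map).
  assert (Hnf : nf m = (d - a_card I d)%nat).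
  { pose proof (nf_nt m). unfold m in H at 3. rewrite length_map, length_seq in H. lia. }
  assert (HQ : Q mu N K m 0 <= C).
  { unfold Q. rewrite Hnf, Hnt. eapply Rle_trans; [|apply (HD d Hd)].
    unfold Rdiv. apply Rmult_le_compat_r. left; apply Rinv_0_lt_compat, INR_fact_lt_0.
    apply Rmult_le_compat_l. apply pow_le; auto.
    apply pow_incr. split. apply ssum_nonneg; auto. unfold G. rewrite Nat.sub_0_r. apply HN. }
  assert (HE : 0 < Rpower eps (2 * tau)) by (unfold Rpower; apply exp_pos).
  assert (Hlow : INR (length l) * Rpower eps (2 * tau) <= lsum mu l).
  { apply count_lb. intros k Hk. destruct (Hl k Hk) as [_ Hgt]. unfold lam_dk in Hgt.
    assert (0 < eps ^ 2) by (apply pow_lt; auto).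
    unfold fk, mu. rewrite fk_rpow; auto; [|lra].
    replace (Rpower eps (2 * tau)) with (Rpower (eps ^ 2) tau).
    - left; apply Rlt_Rpower_l; auto; split; lra.
    - rewrite <- (Rpower_pow 2 eps He). rewrite Rpower_mult. f_equal; try (simpl; ring). }
  rewrite Rpower_Ropp.
  apply Rmult_le_reg_r with (Rpower eps (2 * tau)); auto.
  rewrite Rmult_assoc, Rinv_l; lra.
Qed.

Lemma ssum_S mu c n : ssum mu c (S n) = ssum mu c n + mu (c + n)%nat.
Proof.
  revert c; induction n as [|n IH]; intros c.
  - unfold ssum; simpl; rewrite Nat.add_0_r; ring.
  - change (ssum mu c (S (S n))) with (mu c + ssum mu (S c) (S n)). rewrite IH.
    change (ssum mu c (S n)) with (mu c + ssum mu (S c) n).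
    replace (S c + n)%nat with (c + S n)%nat by lia. ring.
Qed.

Lemma ssum_sum mu n : ssum mu 0 (S n) = sum_f_R0 mu n.
Proof.
  induction n. unfold ssum; simpl; ring.
  rewrite ssum_S, IHn. reflexivity.
Qed.

Lemma ssum_le_inf mu L : (forall x, 0 <= mu x) -> infinite_sum mu L -> forall N, ssum mu 0 N <= L.
Proof.
  intros Hmu Hs.
  assert (Hg : forall n, sum_f_R0 mu n <= L).
  { apply growing_ineq; [| exact Hs]. intro n; simpl. specialize (Hmu (S n)); lra. }
  intros [|N]. unfold ssum; simpl. specialize (Hg 0%nat). simpl in Hg. specialize (Hmu 0%nat). lra.
  rewrite ssum_sum. apply Hg.
Qed.

Lemma ssum_le mu nu c n : (forall x, mu x <= nu x) -> ssum mu c n <= ssum nu c n.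
Proof.
  intros H; revert c; induction n; intros c; unfold ssum in *; simpl. lra.
  specialize (IHn (S c)). specialize (H c). lra.
Qed.

Lemma lam_dec lam : (forall m, lam (S m) <= lam m) -> forall x, lam x <= lam 0%nat.
Proof. intros H x; induction x. lra. specialize (H x); lra. Qed.

Lemma a_le_d I d : (a_card I d <= d)%nat.
Proof.
  pose proof (nf_nt (map (I d) (seq 0 d))). rewrite nt_map, length_map, length_seq in H.
  unfold a_card; lia.
Qed.

Lemma pow_le1 K n : 0 <= K -> K <= 1 -> K ^ n <= 1.
Proof. intros; induction n; simpl. lra. pose proof (pow_le K n H). nra. Qed.

Theorem proposition6 (lam : nat -> R) (I : nat -> nat -> bool) (tau0 : R) :
  (* eigenvalues: nonnegative, nonincreasing *)
  (forall m, 0 <= lam m) ->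
  (forall m, lam (S m) <= lam m) ->
  (* admissible index sets I_d *)
  admissible_I I ->
  (* standing assumptions: lambda_2 > 0, initial errors positive *)
  0 < lam 1%nat ->
  (forall d, (1 <= d)%nat -> 0 < init_err_A lam I d) ->
  (* lambda in l_{tau0}, tau0 in (0, oo) *)
  0 < tau0 -> in_ltau lam tau0 ->
  (* (i) *)
  (lam 0%nat < 1 -> strongly_poly_tractable lam I) /\
  (* (ii) *)
  (1 <= lam 0%nat ->
   (exists tau L d0, tau0 <= tau /\ ltau_pow lam tau L /\
      forall d, (1 <= d)%nat -> (d0 <= d)%nat ->
        ln (INR (fact (a_card I d))) / INR d >= ln L) ->
   strongly_poly_tractable lam I).
Proof.
  intros Hlam Hdec _ Hl1 _ Htau0 [L0 HL0].
  assert (Hl0 : 0 < lam 0%nat) by (specialize (Hdec 0%nat); lra).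
  split.
  - intros Hlt1.
    assert (HL0pos : 0 < L0).
    { pose proof (ssum_le_inf _ _ (fun x => rpow_nonneg (lam x) tau0) HL0 1%nat) as H.
      unfold ssum in H; simpl in H. unfold rpow in H.
      destruct (Req_EM_T (lam 0%nat) 0); [lra|].
      assert (0 < Rpower (lam 0%nat) tau0) by (unfold Rpower; apply exp_pos). lra. }
    assert (Hln : ln (lam 0%nat) < 0) by (rewrite <- ln_1; apply ln_increasing; lra).
    set (t := Rabs (ln L0) / (- ln (lam 0%nat))).
    assert (Ht : 0 <= t).
    { unfold t, Rdiv. apply Rmult_le_pos. apply Rabs_pos. left; apply Rinv_0_lt_compat; lra. }
    set (K := L0 * Rpower (lam 0%nat) t).
    assert (HKpos : 0 <= K).
    { unfold K. apply Rmult_le_pos; [lra|]. left; unfold Rpower; apply exp_pos. }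
    assert (HK1 : K <= 1).
    { unfold K, Rpower.
      replace (t * ln (lam 0%nat)) with (- Rabs (ln L0)) by (unfold t; field; lra).
      assert (exp (- Rabs (ln L0)) <= exp (- ln L0)).
      { destruct (Rle_lt_or_eq_dec (- Rabs (ln L0)) (- ln L0)).
        - pose proof (Rle_abs (ln L0)). lra.
        - left; apply exp_increasing; auto.
        - right; rewrite e; auto. }
      rewrite (exp_Ropp (ln L0)), exp_ln in H by auto.
      apply Rle_trans with (L0 * / L0). apply Rmult_le_compat_l; lra.
      right; field; lra. }
    apply (spt_generic lam I (tau0 + t) K 1); auto; try lra.
    + intros N. apply Rle_trans with (ssum (fun x => rpow (lam x) tau0 * Rpower (lam 0%nat) t) 0 N).
      * apply ssum_le. intros x. unfold rpow. destruct (Req_EM_T (lam x) 0). lra.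
        assert (0 < lam x) by (specialize (Hlam x); lra).
        rewrite Rpower_plus. apply Rmult_le_compat_l. left; unfold Rpower; apply exp_pos.
        apply Rle_Rpower_l; auto. split; auto. apply lam_dec; auto.
      * unfold ssum. rewrite (sum_scal (fun x => rpow (lam x) tau0)). unfold K.
        apply Rmult_le_compat_r. left; unfold Rpower; apply exp_pos.
        apply (ssum_le_inf _ _ (fun x => rpow_nonneg (lam x) tau0) HL0).
    + intros d Hd.
      assert (1 <= INR (fact (a_card I d))).
      { rewrite <- INR_1. apply le_INR. pose proof (lt_O_fact (a_card I d)). lia. }
      pose proof (pow_le1 K (d - a_card I d) HKpos HK1).
      pose proof (pow_le1 K (a_card I d) HKpos HK1).
      pose proof (pow_le K (d - a_card I d) HKpos).
      pose proof (pow_le K (a_card I d) HKpos).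
      apply Rmult_le_reg_r with (INR (fact (a_card I d))); [lra|].
      unfold Rdiv. rewrite Rmult_assoc, Rinv_l by lra. nra.
  - intros Hge1 [tau [L [d0 [Htt [HL Hcond]]]]].
    assert (Htau : 0 < tau) by lra.
    assert (HL1 : 1 <= L).
    { pose proof (ssum_le_inf _ _ (fun x => rpow_nonneg (lam x) tau) HL 1%nat) as H.
      unfold ssum in H; simpl in H. unfold rpow in H.
      destruct (Req_EM_T (lam 0%nat) 0); [lra|].
      assert (1 <= Rpower (lam 0%nat) tau).
      { replace 1 with (Rpower 1 tau) by (unfold Rpower; rewrite ln_1, Rmult_0_r, exp_0; auto).
        apply Rle_Rpower_l; lra. }
      lra. }
    apply (spt_generic lam I tau L (Rmax 1 (L ^ d0))); auto; try lra.
    + pose proof (Rmax_l 1 (L ^ d0)); lra.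
    + apply (ssum_le_inf _ _ (fun x => rpow_nonneg (lam x) tau) HL).
    + intros d Hd. rewrite <- pow_add, Nat.sub_add by apply a_le_d.
      set (F := INR (fact (a_card I d))).
      assert (HF : 1 <= F).
      { unfold F. rewrite <- INR_1. apply le_INR. pose proof (lt_O_fact (a_card I d)). lia. }
      assert (HLd : 0 < L ^ d) by (apply pow_lt; lra).
      destruct (le_lt_dec d0 d) as [Hle|Hlt].
      * specialize (Hcond d Hd Hle). fold F in Hcond.
        assert (Hdpos : INR d > 0) by (apply lt_0_INR; lia).
        apply Rge_le in Hcond.
        apply Rmult_le_compat_r with (r := INR d) in Hcond; [|lra].
        replace (ln F / INR d * INR d) with (ln F) in Hcond by (field; lra).
        rewrite Rmult_comm, <- ln_pow in Hcond by lra.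
        assert (L ^ d <= F).
        { destruct (Rle_or_lt (L ^ d) F) as [h|h]; auto.
          pose proof (ln_increasing F (L ^ d) ltac:(lra) h). lra. }
        apply Rle_trans with 1; [|apply Rmax_l].
        apply Rmult_le_reg_r with F; [lra|].
        unfold Rdiv. rewrite Rmult_assoc, Rinv_l by lra. lra.
      * apply Rle_trans with (L ^ d0); [|apply Rmax_r].
        apply Rle_trans with (L ^ d).
        -- apply Rmult_le_reg_r with F; [lra|].
           unfold Rdiv. rewrite Rmult_assoc, Rinv_l by lra. nra.
        -- apply Rle_pow; [lra| lia].
Qed.
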